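(* Consider a Factored Non-stationary MDP whose data are generated by the structural equations below, and suppose that all change factors $\boldsymbol{\theta}^s_t$ and $\boldsymbol{\theta}^r_t$ are observed (so the joint process of states, actions, rewards and change factors is a Markov process). Assume the causal Markov condition and faithfulness hold for the dynamic Bayesian network $\mathcal{G}$ with respect to the joint distribution of all these variables (i.e., conditional independences among the variables correspond exactly to d-separations in $\mathcal{G}$ unrolled over time). Then all binary masks $\boldsymbol{C}^{\boldsymbol{s}\to\boldsymbol{s}}$, $\boldsymbol{C}^{\boldsymbol{a}\to\boldsymbol{s}}$, $\boldsymbol{C}^{\boldsymbol{\theta}^s\to\boldsymbol{s}}$, $\boldsymbol{c}^{\boldsymbol{s}\to r}$, $\boldsymbol{c}^{\boldsymbol{a}\to r}$, $\boldsymbol{C}^{\boldsymbol{\theta}^s\to\boldsymbol{\theta}^s}$ and $\boldsymbol{C}^{\boldsymbol{\theta}^r\to\boldsymbol{\theta}^r}$ are identifiable from the joint distribution of the observed variables; that is, the causal graph $\mathcal{G}$ can be fully recovered.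
   Context: States $\boldsymbol{s}_t=(s_{1,t},\dots,s_{d,t})\in\mathbb{R}^d$, actions $\boldsymbol{a}_t\in\mathbb{R}^m$, rewards $r_t\in\mathbb{R}$, dynamics change factors $\boldsymbol{\theta}^s_t\in\mathbb{R}^p$, reward change factors $\boldsymbol{\theta}^r_t\in\mathbb{R}^q$. The generative process is, for $i=1,\dots,d$, $j=1,\dots,p$, $k=1,\dots,q$: $s_{i,t}=f_i(\boldsymbol{c}^{\boldsymbol{s}\to\boldsymbol{s}}_i\odot\boldsymbol{s}_{t-1},\ \boldsymbol{c}^{\boldsymbol{a}\to\boldsymbol{s}}_i\odot\boldsymbol{a}_{t-1},\ \boldsymbol{c}^{\boldsymbol{\theta}^s\to\boldsymbol{s}}_i\odot\boldsymbol{\theta}^s_t,\ \epsilon^s_{i,t})$; $r_t=h(\boldsymbol{c}^{\boldsymbol{s}\to r}\odot\boldsymbol{s}_t,\ \boldsymbol{c}^{\boldsymbol{a}\to r}\odot\boldsymbol{a}_t,\ \boldsymbol{\theta}^r_t,\ \epsilon^r_t)$; $\theta^s_{j,t}=g^s(\boldsymbol{c}^{\boldsymbol{\theta}^s\to\boldsymbol{\theta}^s}_j\odot\boldsymbol{\theta}^s_{t-1},\ \epsilon^{\theta^s}_t)$; $\theta^r_{k,t}=g^r(\boldsymbol{c}^{\boldsymbol{\theta}^r\to\boldsymbol{\theta}^r}_k\odot\boldsymbol{\theta}^r_{t-1},\ \epsilon^{\theta^r}_t)$, where $\odot$ is the elementwise product, $f_i,h,g^s,g^r$ are (nonlinear)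 functions, and all noise terms are i.i.d. and mutually independent. The binary masks $\boldsymbol{c}^{\boldsymbol{s}\to\boldsymbol{s}}_i\in\{0,1\}^d$, $\boldsymbol{c}^{\boldsymbol{a}\to\boldsymbol{s}}_i\in\{0,1\}^m$, $\boldsymbol{c}^{\boldsymbol{\theta}^s\to\boldsymbol{s}}_i\in\{0,1\}^p$, $\boldsymbol{c}^{\boldsymbol{s}\to r}\in\{0,1\}^d$, $\boldsymbol{c}^{\boldsymbol{a}\to r}\in\{0,1\}^m$, $\boldsymbol{c}^{\boldsymbol{\theta}^s\to\boldsymbol{\theta}^s}_j\in\{0,1\}^p$, $\boldsymbol{c}^{\boldsymbol{\theta}^r\to\boldsymbol{\theta}^r}_k\in\{0,1\}^q$ are time-invariant and grouped into matrices $\boldsymbol{C}^{\boldsymbol{s}\to\boldsymbol{s}}=[\boldsymbol{c}^{\boldsymbol{s}\to\boldsymbol{s}}_i]_{i=1}^d$, $\boldsymbol{C}^{\boldsymbol{a}\to\boldsymbol{s}}=[\boldsymbol{c}^{\boldsymbol{a}\to\boldsymbol{s}}_i]_{i=1}^d$, $\boldsymbol{C}^{\boldsymbol{\theta}^s\to\boldsymbol{s}}=[\boldsymbol{c}^{\boldsymbol{\theta}^s\to\boldsymbol{s}}_i]_{i=1}^d$, $\boldsymbol{C}^{\boldsymbol{\theta}^s\to\boldsymbol{\theta}^s}=[\boldsymbol{c}^{\boldsymbol{\theta}^s\to\boldsymbol{\theta}^s}_j]_{j=1}^p$, $\boldsymbol{C}^{\boldsymbol{\theta}^r\to\boldsymbol{\theta}^r}=[\boldsymbol{c}^{\boldsymbol{\theta}^r\to\boldsymbol{\theta}^r}_k]_{k=1}^q$.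 The dynamic Bayesian network $\mathcal{G}$ has an edge from a variable to the left-hand-side variable of an equation exactly when the corresponding mask entry equals $1$ (each component of $\boldsymbol{\theta}^r_t$ is a parent of $r_t$). Standing assumptions: the graph is time-invariant, there are no unobserved confounders, there are no instantaneous causal effects among state, action and reward variables, and actions are not caused by any other variable of the system. *)

(* Defs.v *)
From mathcomp Require Import all_boot all_order all_algebra.
Set Implicit Arguments. Unset Strict Implicit. Unset Printing Implicit Defensive.

(* Variables of the unrolled dynamic Bayesian network, indexed by time t : nat *)
Inductive fvar (d m p q : nat) : Type :=
| Sv  of 'I_d & nat
| Av  of 'I_m & nat
| Rv  of nat
| THs of 'I_p & nat
| THr of 'I_q & nat.

(* Row i of a matrix is the mask vector c_i:
   Css i j  : s_{j,t-1}       -> s_{i,t}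
   Cas i k  : a_{k,t-1}       -> s_{i,t}
   Cths i k : theta^s_{k,t}   -> s_{i,t}
   csr 0 i  : s_{i,t}         -> r_t
   car 0 k  : a_{k,t}         -> r_t
   Ctt j k  : theta^s_{k,t-1} -> theta^s_{j,t}
   Crr j k  : theta^r_{k,t-1} -> theta^r_{j,t} *)
Record masks (d m p q : nat) := Masks {
  Css  : 'M[bool]_(d, d);
  Cas  : 'M[bool]_(d, m);
  Cths : 'M[bool]_(d, p);
  csr  : 'rV[bool]_d;
  car  : 'rV[bool]_m;
  Ctt  : 'M[bool]_(p, p);
  Crr  : 'M[bool]_(q, q) }.

Definition edge d m p q (M : masks d m p q) (u v : fvar d m p q) : Prop :=
  match u, v with
  | Sv j t, Sv i t' => t' = t.+1 /\ Css M i j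
  | Av k t, Sv i t' => t' = t.+1 /\ Cas M i k
  | THs k t, Sv i t' => t' = t /\ Cths M i k
  | Sv i t, Rv t' => t' = t /\ csr M ord0 i
  | Av k t, Rv t' => t' = t /\ car M ord0 k
  | THr k t, Rv t' => t' = t
  | THs k t, THs j t' => t' = t.+1 /\ Ctt M j k
  | THr k t, THr j t' => t' = t.+1 /\ Crr M j k
  | _, _ => False
  end.

Section Dsep.
Variables (V : Type) (E : V -> V -> Prop).

Fixpoint inlist (x : V) (s : seq V) : Prop :=
  match s with [::] => False | y :: s' => y = x \/ inlist x s' end.

Fixpoint nodupP (s : seq V) : Prop :=
  match s with [::] => True | y :: s' => ~ inlist y s' /\ nodupP s' end.

Fixpoint is_trail (s : seq V) : Prop :=
  match s with
  | x :: ((y :: _) as s') => (E x y \/ E y x) /\ is_trail s'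
  | _ => True
  end.

Inductive desc : V -> V -> Prop :=
| desc_refl x : desc x x
| desc_step x y z : E x y -> desc y z -> desc x z.

Definition blocked (x0 : V) (Z : seq V) (s : seq V) : Prop :=
  exists i, 0 < i /\ i.+1 < size s /\
    let u := nth x0 s i.-1 in let w := nth x0 s i in let v := nth x0 s i.+1 in
    (E u w /\ E v w /\ ~ (exists z, inlist z Z /\ desc w z))
    \/ (~ (E u w /\ E v w) /\ inlist w Z).

Definition dsep (x0 : V) (X Y Z : seq V) : Prop :=
  forall x y l, inlist x X -> inlist y Y ->
    is_trail (x :: l ++ [:: y]) -> nodupP (x :: l ++ [:: y]) ->
    blocked x0 Z (x :: l ++ [:: y]).

Definition disjointP (X Y : seq V) : Prop := forall v, inlist v X -> ~ inlist v Y.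

End Dsep.

(* The conditional-independence model CI (CI X Y Z : "X is independent of Y given
   Z" in the joint distribution) satisfies the causal Markov condition and
   faithfulness w.r.t. the unrolled graph: independences = d-separations. *)
Definition markov_faithful d m p q
    (CI : seq (fvar d m p q) -> seq (fvar d m p q) -> seq (fvar d m p q) -> Prop)
    (M : masks d m p q) : Prop :=
  forall X Y Z, disjointP X Y -> disjointP X Z -> disjointP Y Z ->
    (CI X Y Z <-> dsep (edge M) (Rv d m p q 0) X Y Z).

(* Main.v *)
Require Import Defs.
From mathcomp Require Import all_boot all_order all_algebra.
From Stdlib Require Import Classical Lia.
From mathcomp Require Import zify.
Set Implicit Arguments. Unset Strict Implicit.

Section Gen.
Variables (V : Type) (E : V -> V -> Prop) (r : V -> nat).
Hypothesis Hr : forall x y, E x y -> (r x < r y)%coq_nat.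

Lemma desc_r x y : desc E x y -> (r x <= r y)%coq_nat.
Proof. elim=> [z|a b c Hab _ IH]; [lia|]. have := Hr Hab; lia. Qed.

Lemma trail_nth x0 s : is_trail E s -> forall k, k.+1 < size s ->
  E (nth x0 s k) (nth x0 s k.+1) \/ E (nth x0 s k.+1) (nth x0 s k).
Proof.
elim: s => [|x s IH] //=.
case: s IH => [|y s] IH //= [Hxy Ht] [|k] Hk //=.
exact: (IH Ht k).
Qed.

Lemma filterP (P : V -> Prop) L :
  exists Z, forall z, inlist z Z <-> inlist z L /\ P z.
Proof.
elim: L => [|x L [Z HZ]]; first by exists [::] => z /=; tauto.
case: (classic (P x)) => Px.
- exists (x :: Z) => z /=; rewrite HZ; split.
  + by case=> [<-|[]]; auto.
  + by case; case=> [<-|]; auto.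
- exists Z => z /=; rewrite HZ; split; first tauto.
  by case; case=> [<-|] //; tauto.
Qed.

Lemma sep_gen x0 u v Z s n :
  (r u < r v)%coq_nat -> ~ E u v -> (forall z, inlist z Z <-> E z v) ->
  size s = n.+2 -> nth x0 s 0 = u -> nth x0 s n.+1 = v ->
  is_trail E s -> blocked E x0 Z s.
Proof.
move=> Huv Nuv HZ Hs H0 Hn Ht.
have up : forall k, k.+1 < n.+2 -> E (nth x0 s k.+1) (nth x0 s k) ->
    (r v <= r (nth x0 s k.+1))%coq_nat -> blocked E x0 Z s.
  elim=> [|k IH] Hk He Hle.
    have := Hr He; rewrite H0; lia.
  have Hk' : k.+1 < size s by rewrite Hs; lia.
  case: (trail_nth x0 Ht Hk') => He2.
  - exists k.+1; split => //; split; first by rewrite Hs.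
    left; split => //; split => //.
    move=> [z [/HZ Hz /desc_r Hd]].
    have := Hr He; have := Hr Hz; lia.
  - apply: IH => //; first by rewrite Hs in Hk'.
    have := Hr He; lia.
have Hn' : n.+1 < size s by rewrite Hs.
case: (trail_nth x0 Ht Hn'); rewrite Hn => He.
- have [n0|npos] := posnP n.
    by rewrite n0 H0 in He.
  exists n; split => //; split; first by rewrite Hs.
  right; split.
  + move=> [_ H2]; rewrite Hn in H2; have := Hr H2; have := Hr He; lia.
  + by apply/HZ.
- by apply: (up n); rewrite ?Hn //; lia.
Qed.

End Gen.

Section Spec.
Variables (d m p q : nat).

Definition rk (x : fvar d m p q) : nat :=
  match x with
  | Sv _ t => 3 * t + 1 | Av _ t => 3 * t | Rv t => 3 * t + 2
  | THs _ t => 3 * t | THr _ t => 3 * t end.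

Definition tm (x : fvar d m p q) : nat :=
  match x with
  | Sv _ t => t | Av _ t => t | Rv t => t | THs _ t => t | THr _ t => t end.

Lemma edge_rk (M : masks d m p q) x y : edge M x y -> (rk x < rk y)%coq_nat.
Proof.
case: x => [i t|i t|t|i t|i t]; case: y => [i' t'|i' t'|t'|i' t'|i' t'] //=;
  try (case=> -> _ ; lia); move=> ->; lia.
Qed.

Lemma edge_tm (M : masks d m p q) x y : edge M x y ->
  tm x = tm y \/ tm x = (tm y).-1.
Proof.
case: x => [i t|i t|t|i t|i t]; case: y => [i' t'|i' t'|t'|i' t'|i' t'] //=;
  try (case=> -> _ ; simpl; lia); move=> ->; lia.
Qed.

Definition allat t : seq (fvar d m p q) :=
  map (fun i => @Sv d m p q i t) (enum 'I_d) ++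
  map (fun i => @Av d m p q i t) (enum 'I_m) ++
  [:: @Rv d m p q t] ++
  map (fun i => @THs d m p q i t) (enum 'I_p) ++
  map (fun i => @THr d m p q i t) (enum 'I_q).

Lemma inlist_map (I : eqType) (f : I -> fvar d m p q) s x :
  x \in s -> inlist (f x) (map f s).
Proof.
elim: s => [|y s IH] //=; rewrite in_cons => /orP [/eqP ->|/IH]; auto.
Qed.

Lemma inlist_catl (x : fvar d m p q) s1 s2 : inlist x s1 -> inlist x (s1 ++ s2).
Proof. elim: s1 => [|y s IH] //= [->|/IH]; auto. Qed.
Lemma inlist_catr (x : fvar d m p q) s1 s2 : inlist x s2 -> inlist x (s1 ++ s2).
Proof. elim: s1 => [|y s IH] //= /IH; auto. Qed.

Lemma in_allat x : inlist x (allat (tm x)).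
Proof.
rewrite /allat; case: x => [i t|i t|t|i t|i t] /=.
- by apply: inlist_catl; apply: inlist_map; rewrite mem_enum.
- by apply: inlist_catr; apply: inlist_catl; apply: inlist_map; rewrite mem_enum.
- by do 2 apply: inlist_catr; left.
- by do 2 apply: inlist_catr; right; apply: inlist_catl; apply: inlist_map; rewrite mem_enum.
- by do 2 apply: inlist_catr; right; apply: inlist_catr; apply: inlist_map; rewrite mem_enum.
Qed.

Lemma parents (M : masks d m p q) v :
  exists Z, forall z, inlist z Z <-> edge M z v.
Proof.
have [Z HZ] := filterP (fun z => edge M z v) (allat (tm v).-1 ++ allat (tm v)).
exists Z => z; rewrite HZ; split; first by case.
move=> He; split => //.
case: (edge_tm He) => <-.
- by apply: inlist_catr; apply: in_allat.
- by apply: inlist_catl; apply: in_allat.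
Qed.

Lemma key CI (M1 M2 : masks d m p q) :
  markov_faithful CI M1 -> markov_faithful CI M2 ->
  forall u v, edge M1 u v -> edge M2 u v.
Proof.
move=> H1 H2 u v He; apply: NNPP => Ne.
have Huv := edge_rk He.
have [Z HZ] := parents M2 v.
have dj1 : disjointP [:: u] [:: v].
  by move=> w /= [<-|//] [Hw|//]; subst; lia.
have dj2 : disjointP [:: u] Z.
  by move=> w /= [<-|//] /HZ.
have dj3 : disjointP [:: v] Z.
  by move=> w /= [<-|//] /HZ /edge_rk; lia.
have D2 : dsep (edge M2) (Rv d m p q 0) [:: u] [:: v] Z.
  move=> x y l /= [<-|//] [<-|//] Ht _.
  apply: (@sep_gen _ _ rk (@edge_rk M2) _ u v Z _ (size l)) => //;
    rewrite /= ?size_cat ?addn1 ?nth_cat ?ltnn ?subnn //.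
have D1 : dsep (edge M1) (Rv d m p q 0) [:: u] [:: v] Z.
  by apply/(H1 _ _ _ dj1 dj2 dj3)/(H2 _ _ _ dj1 dj2 dj3).
have Htr : is_trail (edge M1) [:: u; v] by split => //; left.
have Hnd : nodupP [:: u; v].
  split; last by split.
  by move=> [Hvu|//]; subst; lia.
have [i [Hi [Hi' _]]] := D1 u v [::] (or_introl erefl) (or_introl erefl) Htr Hnd.
move: Hi'; rewrite /=; lia.
Qed.

End Spec.

Theorem proposition1 (d m p q : nat)
    (CI : seq (fvar d m p q) -> seq (fvar d m p q) -> seq (fvar d m p q) -> Prop)
    (M1 M2 : masks d m p q) :
  markov_faithful CI M1 -> markov_faithful CI M2 ->
  Css M1 = Css M2 /\ Cas M1 = Cas M2 /\ Cths M1 = Cths M2 /\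
  csr M1 = csr M2 /\ car M1 = car M2 /\ Ctt M1 = Ctt M2 /\ Crr M1 = Crr M2.
Proof.
move=> H1 H2.
have K12 := key H1 H2; have K21 := key H2 H1.
split; [|split; [|split; [|split; [|split; [|split]]]]];
  apply/matrixP => i j.
- apply/idP/idP => H.
  + by case: (K12 (@Sv d m p q j 0) (@Sv d m p q i 1) (conj erefl H)).
  + by case: (K21 (@Sv d m p q j 0) (@Sv d m p q i 1) (conj erefl H)).
- apply/idP/idP => H.
  + by case: (K12 (@Av d m p q j 0) (@Sv d m p q i 1) (conj erefl H)).
  + by case: (K21 (@Av d m p q j 0) (@Sv d m p q i 1) (conj erefl H)).
- apply/idP/idP => H.
  + by case: (K12 (@THs d m p q j 0) (@Sv d m p q i 0) (conj erefl H)).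
  + by case: (K21 (@THs d m p q j 0) (@Sv d m p q i 0) (conj erefl H)).
- rewrite (ord1 i); apply/idP/idP => H.
  + by case: (K12 (@Sv d m p q j 0) (@Rv d m p q 0) (conj erefl H)).
  + by case: (K21 (@Sv d m p q j 0) (@Rv d m p q 0) (conj erefl H)).
- rewrite (ord1 i); apply/idP/idP => H.
  + by case: (K12 (@Av d m p q j 0) (@Rv d m p q 0) (conj erefl H)).
  + by case: (K21 (@Av d m p q j 0) (@Rv d m p q 0) (conj erefl H)).
- apply/idP/idP => H.
  + by case: (K12 (@THs d m p q j 0) (@THs d m p q i 1) (conj erefl H)).
  + by case: (K21 (@THs d m p q j 0) (@THs d m p q i 1) (conj erefl H)).
- apply/idP/idP => H.
  + by case: (K12 (@THr d m p q j 0) (@THr d m p q i 1) (conj erefl H)).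
  + by case: (K21 (@THr d m p q j 0) (@THr d m p q i 1) (conj erefl H)).
Qed.
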